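(* Assume the standing setup below, fix $T_1\in(0,1)$ and $q\in(0,1]$, and regard $\psi$ as a function of $T_2\in(0,1)$. Then for every $T_2$ with $\psi(T_2)\in[0,1)$, $\psi$ is differentiable at $T_2$ and $\frac{d\psi}{dT_2}<0$.
   Context: Standing setup. $P$ is a probability distribution on $\{0,1,\dots,k_{\max}\}$ with mean $\langle k\rangle=\sum_k kP(k)>0$; $Q(k)=(k+1)P(k+1)/\langle k\rangle$ for $k\ge0$. For $q\in[0,1]$ set $P_q(k_1,k_2)=\binom{k_1+k_2}{k_2}q^{k_2}(1-q)^{k_1}P(k_1+k_2)$ and $Q_q(k_1,k_2)=\binom{k_1+k_2}{k_2}q^{k_2}(1-q)^{k_1}Q(k_1+k_2)$ (with $0^0=1$). For $T_1,T_2\in(0,1)$ and $u\in[0,1]$ let $F(u)=\sum_{k_1,k_2}(1+(u-1)T_1)^{k_1}(1+(u-1)T_2)^{k_2}Q_q(k_1,k_2)$ and $G(u)=\sum_{k_1,k_2}(1+(u-1)T_1)^{k_1}(1+(u-1)T_2)^{k_2}P_q(k_1,k_2)$. Let $u^*$ be the smallest solution in $[0,1]$ of $u=F(u)$ and $\psi=G(u^* )$; with $T_1,q$ fixed, $u^*$ and $\psi$ are functions of $T_2$. *)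

(* Defs.v *)
From Stdlib Require Import Reals ClassicalEpsilon.
Open Scope R_scope.

(* P is a distribution on {0,...,kmax}: represented as P : nat -> R with
   P k = 0 for k > kmax (hypotheses are stated in the theorem). *)

Definition meank (P : nat -> R) (kmax : nat) : R :=
  sum_f_R0 (fun k => INR k * P k) kmax.

Definition Qd (P : nat -> R) (kmax : nat) (k : nat) : R :=
  INR (k + 1) * P (S k) / meank P kmax.

Definition thin (D : nat -> R) (q : R) (k1 k2 : nat) : R :=
  C (k1 + k2) k2 * q ^ k2 * (1 - q) ^ k1 * D (k1 + k2)%nat.

Definition Pq P q := thin P q.
Definition Qq P kmax q := thin (Qd P kmax) q.

(* The double sum over k1,k2 in {0..kmax} contains every nonzero term of the
   (formally infinite) sum, since P_q(k1,k2)=0 when k1+k2>kmax and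
   Q_q(k1,k2)=0 when k1+k2>=kmax. *)
Definition genf (D2 : nat -> nat -> R) (kmax : nat) (T1 T2 u : R) : R :=
  sum_f_R0 (fun k1 =>
    sum_f_R0 (fun k2 =>
      (1 + (u - 1) * T1) ^ k1 * (1 + (u - 1) * T2) ^ k2 * D2 k1 k2) kmax) kmax.

Definition Ffun P kmax q T1 T2 u := genf (Qq P kmax q) kmax T1 T2 u.
Definition Gfun P kmax q T1 T2 u := genf (Pq P q) kmax T1 T2 u.

Definition smallest_fix (f : R -> R) (u : R) : Prop :=
  0 <= u <= 1 /\ f u = u /\ (forall v, 0 <= v <= 1 -> f v = v -> u <= v).

(* u*(T2): the smallest fixed point (chosen by classical description;
   it exists since F is continuous on [0,1] and F(1)=1). *)
Definition ustar P kmax q T1 (T2 : R) : R :=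
  epsilon (inhabits 0) (fun u => smallest_fix (Ffun P kmax q T1 T2) u).

Definition psi P kmax q T1 (T2 : R) : R :=
  Gfun P kmax q T1 T2 (ustar P kmax q T1 T2).

(* Main.v *)
Require Import Defs.
From Stdlib Require Import Reals Lra Lia Psatz ClassicalEpsilon FunctionalExtensionality Classical.
Open Scope R_scope.

Lemma sum_trunc : forall (g : nat -> R) M N, (M <= N)%nat ->
  (forall j, (M < j <= N)%nat -> g j = 0) -> sum_f_R0 g N = sum_f_R0 g M.
Proof.
  intros g M N HMN Hz. induction N.
  - assert (M = 0)%nat by lia. subst. reflexivity.
  - destruct (Nat.eq_dec M (S N)) as [->|Hne]; [reflexivity|].
    rewrite tech5, IHN; [| lia | intros; apply Hz; lia].
    rewrite (Hz (S N)); [ring|lia].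
Qed.

Lemma sum_tri : forall (f : nat -> nat -> R) K,
  sum_f_R0 (fun i => sum_f_R0 (fun j => f i j) (K - i)) K =
  sum_f_R0 (fun n => sum_f_R0 (fun i => f i (n - i)%nat) n) K.
Proof.
  intros f K. induction K.
  - simpl. reflexivity.
  - rewrite tech5. rewrite (tech5 (fun n => sum_f_R0 (fun i => f i (n - i)%nat) n)).
    rewrite <- IHK. rewrite tech5.
    replace (S K - S K)%nat with 0%nat by lia.
    replace (S K - S K)%nat with 0%nat by lia.
    rewrite (sum_eq (fun i => sum_f_R0 (fun j => f i j) (S K - i))
      (fun i => sum_f_R0 (fun j => f i j) (K - i) + f i (S K - i)%nat)).
    + rewrite plus_sum. simpl. ring.
    + intros i Hi. replace (S K - i)%nat with (S (K - i)) by lia.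
      rewrite tech5. f_equal.
Qed.

Lemma genf_thin : forall (D : nat -> R) K q T1 T2 u,
  (forall k, (K < k)%nat -> D k = 0) ->
  genf (thin D q) K T1 T2 u =
  sum_f_R0 (fun n => D n * ((1 - q) * (1 + (u - 1) * T1) + q * (1 + (u - 1) * T2)) ^ n) K.
Proof.
  intros D K q T1 T2 u HD. unfold genf, thin.
  set (y1 := 1 + (u - 1) * T1). set (y2 := 1 + (u - 1) * T2).
  set (f := fun k1 k2 => y1 ^ k1 * y2 ^ k2 *
     (C (k1 + k2) k2 * q ^ k2 * (1 - q) ^ k1 * D (k1 + k2)%nat)).
  transitivity (sum_f_R0 (fun i => sum_f_R0 (fun j => f i j) (K - i)) K).
  - apply sum_eq. intros i Hi. apply sum_trunc; [lia|].
    intros j Hj. unfold f. rewrite HD; [ring|lia].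
  - rewrite sum_tri. apply sum_eq. intros n Hn.
    rewrite binomial. rewrite scal_sum. apply sum_eq. intros i Hi.
    unfold f. replace (i + (n - i))%nat with n by lia.
    rewrite <- pascal_step1 by lia.
    rewrite !Rpow_mult_distr. ring.
Qed.

Definition pg (D : nat -> R) K (y : R) := sum_f_R0 (fun k => D k * y ^ k) K.
Definition pgd (D : nat -> R) K (y : R) := sum_f_R0 (fun k => D k * (INR k * y ^ pred k)) K.

Lemma pg_deriv : forall D K y, derivable_pt_lim (pg D K) y (pgd D K y).
Proof.
  intros D K y. unfold pg, pgd. induction K.
  - simpl. apply (derivable_pt_lim_scal (fun y => y ^ 0) (D 0%nat)).
    apply derivable_pt_lim_pow.
  - simpl. apply derivable_pt_lim_plus; [exact IHK|].
    apply (derivable_pt_lim_scal (fun y => y ^ S K) (D (S K))).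
    apply derivable_pt_lim_pow.
Qed.

Lemma pg_cont : forall D K y, continuity_pt (pg D K) y.
Proof.
  intros. apply derivable_continuous_pt. exists (pgd D K y). apply pg_deriv.
Qed.

Lemma pg_nonneg : forall D K y, (forall k, 0 <= D k) -> 0 <= y -> 0 <= pg D K y.
Proof.
  intros. unfold pg. apply cond_pos_sum. intros. apply Rmult_le_pos; auto. apply pow_le; auto.
Qed.

Lemma pg_mono : forall D K y z, (forall k, 0 <= D k) -> 0 <= y <= z -> pg D K y <= pg D K z.
Proof.
  intros. unfold pg. apply sum_Rle. intros. apply Rmult_le_compat_l; auto. apply pow_incr; auto.
Qed.

Lemma pow_le1 : forall k y, 0 <= y <= 1 -> y ^ k <= 1.
Proof. intros. rewrite <- (pow1 k). apply pow_incr. lra. Qed.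

Lemma pow_lip : forall k y z, 0 <= y <= z -> z <= 1 -> z ^ k - y ^ k <= INR k * (z - y).
Proof.
  induction k; intros y z H1 H2.
  - simpl. lra.
  - rewrite S_INR. simpl.
    assert (Hk := IHk y z H1 H2).
    assert (0 <= y ^ k) by (apply pow_le; lra).
    assert (y ^ k <= 1) by (apply pow_le1; lra).
    assert (y ^ k <= z ^ k) by (apply pow_incr; lra).
    assert (z * (z ^ k - y ^ k) <= 1 * (z ^ k - y ^ k)) by (apply Rmult_le_compat_r; lra).
    assert (y ^ k * (z - y) <= 1 * (z - y)) by (apply Rmult_le_compat_r; lra).
    nra.
Qed.

Lemma pg_lip : forall D K y z, (forall k, 0 <= D k) -> 0 <= y <= z -> z <= 1 ->
  pg D K z - pg D K y <= sum_f_R0 (fun k => D k * INR k) K * (z - y).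
Proof.
  intros. unfold pg. rewrite <- minus_sum. rewrite Rmult_comm, scal_sum.
  apply sum_Rle. intros n _.
  assert (Hl := pow_lip n y z H0 H1). specialize (H n).
  replace (D n * z ^ n - D n * y ^ n) with (D n * (z ^ n - y ^ n)) by ring.
  replace ((D n * INR n) * (z - y)) with (D n * (INR n * (z - y))) by ring.
  apply Rmult_le_compat_l; auto.
Qed.

Lemma bk_ge : forall n x, 0 <= x <= 1 ->
  (1 - x) ^ 2 <= 1 - x ^ (S (S n)) - INR (S (S n)) * (1 - x) * x ^ (S n).
Proof.
  induction n; intros x Hx.
  - simpl. lra.
  - specialize (IHn x Hx).
    assert (0 <= x ^ (S n)) by (apply pow_le; lra).
    assert (0 <= INR (S (S n))) by (apply pos_INR).
    replace (x ^ S (S (S n))) with (x * x * x ^ S n) by (simpl; ring).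
    replace (x ^ S (S n)) with (x * x ^ S n) in * by (simpl; ring).
    rewrite S_INR.
    assert (0 <= INR (S (S n)) * (1 - x) * (1 - x) * x ^ S n).
    { apply Rmult_le_pos; [|lra]. apply Rmult_le_pos; [|lra]. apply Rmult_le_pos; lra. }
    nra.
Qed.

Lemma div_nonneg : forall a b, 0 <= a -> 0 < b -> 0 <= a / b.
Proof. intros. unfold Rdiv. apply Rmult_le_pos; auto. left. apply Rinv_0_lt_compat; auto. Qed.

Lemma bk_term : forall K k x, (k <= K)%nat -> 0 < x < 1 ->
  0 <= 1 - x ^ k - INR k * (1 - x) * x ^ pred k /\
  1 - x ^ k <= (1 - x) + (INR K / (1 - x)) * (1 - x ^ k - INR k * (1 - x) * x ^ pred k).
Proof.
  intros K k x Hk Hx.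
  destruct k as [|[|n]].
  - simpl. assert (0 <= INR K / (1 - x)) by (apply div_nonneg; [apply pos_INR|lra]). nra.
  - simpl. assert (0 <= INR K / (1 - x)) by (apply div_nonneg; [apply pos_INR|lra]). nra.
  - assert (Hb := bk_ge n x ltac:(lra)). simpl pred.
    assert (Hl := pow_lip (S (S n)) x 1 ltac:(lra) ltac:(lra)). rewrite pow1 in Hl.
    assert (INR (S (S n)) <= INR K) by (apply le_INR; lia).
    split; [nra|].
    assert (Hc: INR K / (1 - x) * (1 - x) ^ 2 = INR K * (1 - x)) by (field; lra).
    assert (0 <= INR K / (1 - x)) by (apply div_nonneg; [apply pos_INR|lra]).
    assert (INR K / (1 - x) * (1 - x) ^ 2 <= INR K / (1 - x) *
       (1 - x ^ S (S n) - INR (S (S n)) * (1 - x) * x ^ S n)) by (apply Rmult_le_compat_l; lra).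
    nra.
Qed.

Lemma transv : forall D K x a, (forall k, 0 <= D k) -> sum_f_R0 D K = 1 ->
  0 < x < 1 -> 0 < a < 1 -> 1 - x = a * (1 - pg D K x) -> a * pgd D K x < 1.
Proof.
  intros D K x a HD HD1 Hx Ha Hfix.
  set (B := sum_f_R0 (fun k => D k * (1 - x ^ k - INR k * (1 - x) * x ^ pred k)) K).
  assert (HB : B = 1 - pg D K x - (1 - x) * pgd D K x).
  { unfold B, pg, pgd.
    replace (1 - sum_f_R0 (fun k => D k * x ^ k) K - (1 - x) * sum_f_R0 (fun k => D k * (INR k * x ^ pred k)) K)
      with (sum_f_R0 D K - sum_f_R0 (fun k => D k * x ^ k) K - sum_f_R0 (fun k => D k * (INR k * x ^ pred k) * (1 - x)) K)
      by (rewrite HD1, <- scal_sum; ring).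
    rewrite <- !minus_sum. apply sum_eq. intros. ring. }
  assert (Hle : 1 - pg D K x <= (1 - x) + (INR K / (1 - x)) * B).
  { unfold B, pg.
    replace (1 - sum_f_R0 (fun k => D k * x ^ k) K) with (sum_f_R0 D K - sum_f_R0 (fun k => D k * x ^ k) K) by (rewrite HD1; ring).
    rewrite <- minus_sum.
    replace ((1 - x) + INR K / (1 - x) * sum_f_R0 (fun k => D k * (1 - x ^ k - INR k * (1 - x) * x ^ pred k)) K)
      with ((1 - x) * sum_f_R0 D K + INR K / (1 - x) * sum_f_R0 (fun k => D k * (1 - x ^ k - INR k * (1 - x) * x ^ pred k)) K)
      by (rewrite HD1; ring).
    rewrite !scal_sum. rewrite <- plus_sum. apply sum_Rle. intros k Hk.
    destruct (bk_term K k x Hk Hx) as [H1 H2]. specialize (HD k).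
    replace (D k - D k * x ^ k) with (D k * (1 - x ^ k)) by ring.
    replace (D k * (1 - x) + D k * (1 - x ^ k - INR k * (1 - x) * x ^ pred k) * (INR K / (1 - x)))
      with (D k * ((1 - x) + (INR K / (1 - x)) * (1 - x ^ k - INR k * (1 - x) * x ^ pred k))) by ring.
    apply Rmult_le_compat_l; auto. }
  assert (0 <= INR K / (1 - x)) by (apply div_nonneg; [apply pos_INR|lra]).
  assert (1 - pg D K x > 1 - x) by nra.
  assert (B > 0) by nra.
  nra.
Qed.

Lemma cont_ed : forall F x, continuity_pt F x -> forall eps, 0 < eps ->
  exists d, 0 < d /\ forall y, Rabs (y - x) < d -> Rabs (F y - F x) < eps.
Proof.
  intros F x H eps He. destruct (H eps He) as [d [Hd Hy]].
  exists d. split; auto. intros y Hyx.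
  destruct (Req_dec y x) as [->|Hne].
  - rewrite Rminus_diag, Rabs_R0. auto.
  - apply (Hy y). split; [split; [exact I | auto]|]. exact Hyx.
Qed.

Lemma cont_sub_id : forall F, continuity F -> continuity (fun w => w - F w).
Proof. intros. apply continuity_minus; auto. apply derivable_continuous, derivable_id. Qed.

Lemma below_pos : forall F u, continuity F -> 0 <= F 0 -> smallest_fix F u ->
  forall v, 0 <= v < u -> v < F v.
Proof.
  intros F u HF H0 [Hu [Hfu Hmin]] v Hv.
  destruct (Rlt_le_dec v (F v)) as [|Hle]; auto. exfalso.
  destruct Hle as [Hlt|Heq].
  - destruct H0 as [H0|H0].
    + assert (0 < v) by (destruct (Req_dec v 0) as [->|]; lra).
      destruct (IVT (fun w => w - F w) 0 v (cont_sub_id F HF)) as [z [Hz Hz0]]; try lra.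
      assert (u <= z) by (apply Hmin; lra). lra.
    + assert (u <= 0) by (apply Hmin; lra). lra.
  - assert (u <= v) by (apply Hmin; lra). lra.
Qed.

Lemma fix_le : forall F u w, continuity F -> 0 <= F 0 -> smallest_fix F u ->
  0 <= w <= 1 -> F w <= w -> u <= w.
Proof.
  intros F u w HF H0 Hs Hw Hfw.
  destruct (Rlt_le_dec w u); auto.
  assert (w < F w) by (apply (below_pos F u); auto; lra). lra.
Qed.

Lemma sfix_exists : forall F, continuity F -> F 1 = 1 -> 0 <= F 0 ->
  exists u, smallest_fix F u.
Proof.
  intros F HF H1 H0.
  set (L := fun w => forall v, 0 <= v <= 1 -> F v = v -> w <= v).
  assert (Hb : bound L) by (exists 1; intros w Hw; apply Hw; lra).
  assert (He : exists w, L w) by (exists 0; intros v Hv _; lra).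
  destruct (completeness L Hb He) as [m [Hub Hlub]].
  assert (Hm0 : 0 <= m) by (apply Hub; intros v Hv _; lra).
  assert (Hm1 : m <= 1) by (apply Hlub; intros w Hw; apply Hw; lra).
  assert (Hmin : forall v, 0 <= v <= 1 -> F v = v -> m <= v).
  { intros v Hv Hfv. apply Hlub. intros w Hw. apply Hw; auto. }
  exists m. split; [lra|]. split; [|exact Hmin].
  destruct (Rtotal_order (F m) m) as [Hlt|[Heq|Hgt]]; auto; exfalso.
  - destruct H0 as [H0|H0].
    + assert (0 < m) by (destruct (Req_dec m 0) as [Hz|]; [rewrite Hz in Hlt; lra | lra]).
      destruct (IVT (fun w => w - F w) 0 m (cont_sub_id F HF)) as [z [Hz Hz0]]; try lra.
      assert (m <= z) by (apply Hmin; lra).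
      assert (z = m) by lra. subst z. lra.
    + assert (m <= 0) by (apply Hmin; lra). assert (m = 0) by lra. subst m. lra.
  - assert (Hm1' : m < 1) by (destruct (Req_dec m 1) as [Hz|]; [rewrite Hz in Hgt; lra|lra]).
    set (eps := (F m - m) / 2).
    destruct (cont_ed F m (HF m) eps ltac:(unfold eps; lra)) as [d [Hd Hc]].
    set (w := m + Rmin (d / 2) eps).
    assert (Hmn1 : 0 < Rmin (d/2) eps) by (apply Rmin_pos; unfold eps; lra).
    assert (Hmn2 : Rmin (d/2) eps <= d / 2) by apply Rmin_l.
    assert (Hmn3 : Rmin (d/2) eps <= eps) by apply Rmin_r.
    assert (HnL : ~ L w) by (intro HL; assert (w <= m) by (apply Hub; auto); unfold w in *; lra).
    unfold L in HnL. apply not_all_ex_not in HnL. destruct HnL as [v Hv].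
    apply imply_to_and in Hv. destruct Hv as [Hv1 Hv].
    apply imply_to_and in Hv. destruct Hv as [Hv2 Hv].
    apply Rnot_le_lt in Hv.
    assert (m <= v) by (apply Hmin; auto).
    assert (Rabs (v - m) < d) by (rewrite Rabs_right; unfold w in *; lra).
    specialize (Hc v H2). apply Rabs_def2 in Hc. unfold w, eps in *. lra.
Qed.

Lemma mk_lim : forall g D l x0,
  (forall eps, 0 < eps -> exists alp, 0 < alp /\ forall x, D x -> Rabs (x - x0) < alp -> Rabs (g x - l) < eps) ->
  limit1_in g D l x0.
Proof.
  intros g D l x0 H eps He. destruct (H eps He) as [a [Ha Hx]].
  exists a. split; auto. intros x [Dx Hd]. apply Hx; auto.
Qed.

Lemma use_lim : forall g D l x0, limit1_in g D l x0 ->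
  forall eps, 0 < eps -> exists alp, 0 < alp /\ forall x, D x -> Rabs (x - x0) < alp -> Rabs (g x - l) < eps.
Proof.
  intros g D l x0 H eps He. destruct (H eps He) as [a [Ha Hx]].
  exists a. split; auto. intros x Dx Hd. apply (Hx x); split; auto.
Qed.

Lemma lipabs : forall f L, (forall y z, 0 <= y <= z -> z <= 1 -> f y <= f z) ->
  0 <= L -> (forall y z, 0 <= y <= z -> z <= 1 -> f z - f y <= L * (z - y)) ->
  forall y z, 0 <= y <= 1 -> 0 <= z <= 1 -> f y - L * Rabs (z - y) <= f z.
Proof.
  intros f L Hm HL Hl y z Hy Hz.
  destruct (Rle_dec y z).
  - assert (f y <= f z) by (apply Hm; lra). assert (0 <= L * Rabs (z - y)) by (apply Rmult_le_pos; auto; apply Rabs_pos). lra.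
  - rewrite Rabs_left by lra. assert (f y - f z <= L * (y - z)) by (apply Hl; lra). lra.
Qed.

Lemma Fcont : forall f, continuity f -> forall A, continuity (fun u => f (1 + (u - 1) * A)).
Proof.
  intros f Hf A. intro u.
  apply (continuity_pt_comp (fun u => 1 + (u - 1) * A) f).
  - apply derivable_continuous_pt. apply derivable_pt_plus; [apply derivable_pt_const|].
    apply derivable_pt_mult; [|apply derivable_pt_const].
    apply derivable_pt_minus; [apply derivable_pt_id|apply derivable_pt_const].
  - apply Hf.
Qed.

Lemma A_in : forall c0 q t, 0 < q -> 0 < c0 + q * t < 1 ->
  exists d, 0 < d /\ forall s, Rabs (s - t) < d -> 0 < c0 + q * s < 1.
Proof.
  intros c0 q t Hq Ha. exists (Rmin (c0 + q * t) (1 - (c0 + q * t)) / q).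
  split. { apply Rdiv_lt_0_compat; auto. apply Rmin_pos; lra. }
  intros s Hs. assert (H1 := Rmin_l (c0 + q * t) (1 - (c0 + q * t))).
  assert (H2 := Rmin_r (c0 + q * t) (1 - (c0 + q * t))).
  assert (Hq' : q * Rabs (s - t) < Rmin (c0 + q * t) (1 - (c0 + q * t))).
  { apply (Rmult_lt_compat_l q) in Hs; auto.
    replace (q * (Rmin (c0 + q * t) (1 - (c0 + q * t)) / q)) with (Rmin (c0 + q * t) (1 - (c0 + q * t))) in Hs by (field; lra).
    exact Hs. }
  destruct (Rle_dec s t).
  - rewrite Rabs_left1 in Hq' by lra. nra.
  - rewrite Rabs_right in Hq' by lra. nra.
Qed.

Lemma lin_d : forall a x, derivable_pt_lim (fun v => 1 + (v - 1) * a) x a.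
Proof.
  intros a x eps He. exists (mkposreal 1 Rlt_0_1). intros h Hh _.
  replace ((1 + (x + h - 1) * a - (1 + (x - 1) * a)) / h - a) with 0 by (field; auto).
  rewrite Rabs_R0; auto.
Qed.

Lemma U_cont : forall (f fd : R -> R) (L c0 q t : R) (U : R -> R),
  (forall y, derivable_pt_lim f y (fd y)) ->
  (forall y z, 0 <= y <= z -> z <= 1 -> f y <= f z) ->
  (forall y, 0 <= y <= 1 -> 0 <= f y) ->
  f 1 = 1 -> 0 <= L ->
  (forall y z, 0 <= y <= z -> z <= 1 -> f z - f y <= L * (z - y)) ->
  (forall x a, 0 < x < 1 -> 0 < a < 1 -> 1 - x = a * (1 - f x) -> a * fd x < 1) ->
  0 <= c0 -> 0 < q -> 0 < c0 + q * t < 1 ->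
  (forall s, 0 < c0 + q * s < 1 -> smallest_fix (fun u => f (1 + (u - 1) * (c0 + q * s))) (U s)) ->
  U t < 1 ->
  forall eps, 0 < eps -> exists d, 0 < d /\ forall s, Rabs (s - t) < d -> Rabs (U s - U t) < eps.
Proof.
  intros f fd L c0 q t U Hd Hm Hnn H1 HL Hl Htr Hc0 Hq Ha HU Hu1 eps0 Heps0.
  remember (eps0 / 2) as eps eqn:Heqe. assert (Heps : 0 < eps) by lra.
  assert (Hfc : continuity f) by (intro y; apply derivable_continuous_pt; exists (fd y); apply Hd).
  set (a0 := c0 + q * t). set (u0 := U t). set (x0 := 1 + (u0 - 1) * a0).
  assert (Ha0 : 0 < a0 < 1) by exact Ha.
  assert (Hu1' : u0 < 1) by exact Hu1.
  destruct (HU t Ha) as [[Hu0a Hu0b] [Hfix Hsm]]. fold a0 u0 in Hfix, Hu0a, Hu0b, Hsm.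
  destruct (A_in c0 q t Hq Ha) as [d2 [Hd2 HA]].
  assert (HF0 : forall s, 0 < c0 + q * s < 1 -> 0 <= f (1 + (0 - 1) * (c0 + q * s))) by (intros; apply Hnn; nra).
  assert (HF1 : forall s, f (1 + (1 - 1) * (c0 + q * s)) = 1) by (intros; replace (1 + (1 - 1) * (c0 + q * s)) with 1 by ring; exact H1).
  assert (Hup : exists d1, 0 < d1 /\ forall s, Rabs (s - t) < d1 -> U s <= u0 + eps).
  { set (phi := fun v => f (1 + (v - 1) * a0) - v).
    assert (Hx0 : 0 < x0 < 1) by (unfold x0; split; nra).
    assert (Htr0 : a0 * fd x0 < 1).
    { apply Htr; auto. unfold x0. rewrite Hfix. ring. }
    assert (Hdphi : derivable_pt_lim phi u0 (fd x0 * a0 - 1)).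
    { unfold phi. apply derivable_pt_lim_minus; [|apply derivable_pt_lim_id].
      apply (derivable_pt_lim_comp (fun v => 1 + (v - 1) * a0) f u0 a0 (fd x0)).
      - apply lin_d.
      - apply Hd. }
    set (e' := (1 - a0 * fd x0) / 2).
    destruct (Hdphi e' ltac:(unfold e'; lra)) as [del Hdel].
    set (h := Rmin (del / 2) (Rmin eps ((1 - u0) / 2))).
    assert (Hh1 : h <= del / 2) by apply Rmin_l.
    assert (Hh2 : h <= eps) by (eapply Rle_trans; [apply Rmin_r|apply Rmin_l]).
    assert (Hh3 : h <= (1 - u0) / 2) by (eapply Rle_trans; [apply Rmin_r|apply Rmin_r]).
    assert (Hh0 : 0 < h) by (apply Rmin_pos; [destruct del; simpl; lra| apply Rmin_pos; lra]).
    assert (Hphi0 : phi u0 = 0) by (unfold phi; lra).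
    assert (Hneg : phi (u0 + h) < 0).
    { assert (Hq1 := Hdel h ltac:(lra) ltac:(rewrite Rabs_right; destruct del; simpl in *; lra)).
      rewrite Hphi0, Rminus_0_r in Hq1. apply Rabs_def2 in Hq1. destruct Hq1 as [Hq1 _].
      assert (phi (u0 + h) / h < 0) by (unfold e' in Hq1; lra).
      destruct (Rlt_le_dec (phi (u0 + h)) 0); auto.
      assert (0 <= phi (u0 + h) / h) by (unfold Rdiv; apply Rmult_le_pos; auto; left; apply Rinv_0_lt_compat; auto).
      lra. }
    set (v := u0 + h).
    set (G := fun s => f (1 + (v - 1) * (c0 + q * s)) - v).
    assert (HGc : continuity_pt G t).
    { unfold G. apply continuity_pt_minus; [|apply continuity_pt_const; intros ? ?; reflexivity].
      apply (continuity_pt_comp (fun s => 1 + (v - 1) * (c0 + q * s)) f).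
      - apply derivable_continuous_pt. apply derivable_pt_plus; [apply derivable_pt_const|].
        apply derivable_pt_mult; [apply derivable_pt_const|].
        apply derivable_pt_plus; [apply derivable_pt_const|].
        apply derivable_pt_mult; [apply derivable_pt_const|apply derivable_pt_id].
      - apply Hfc. }
    assert (HGt : G t < 0) by exact Hneg.
    destruct (cont_ed G t HGc (- G t / 2) ltac:(lra)) as [dg [Hdg HG]].
    exists (Rmin dg d2). split; [apply Rmin_pos; auto|].
    intros s Hs.
    assert (Hs1 : Rabs (s - t) < dg) by (eapply Rlt_le_trans; [exact Hs|apply Rmin_l]).
    assert (Hs2 : Rabs (s - t) < d2) by (eapply Rlt_le_trans; [exact Hs|apply Rmin_r]).
    specialize (HG s Hs1). apply Rabs_def2 in HG.
    assert (Hv : U s <= v).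
    { apply (fix_le (fun u => f (1 + (u - 1) * (c0 + q * s)))); auto.
      - apply Fcont; auto.
      - unfold v; lra.
      - unfold G in HG; lra. }
    unfold v in Hv. lra. }
  assert (Hlow : exists d3, 0 < d3 /\ forall s, Rabs (s - t) < d3 -> u0 - eps <= U s).
  { destruct (Rlt_le_dec (u0 - eps) 0) as [Hneg|Hpos].
    - exists d2. split; auto. intros s Hs. destruct (HU s (HA s Hs)) as [[? ?] _]. lra.
    - set (phi := fun v => f (1 + (v - 1) * a0) - v).
      assert (Hphic : forall c, continuity_pt phi c).
      { intro c. unfold phi. apply continuity_pt_minus; [apply Fcont; auto|apply derivable_continuous_pt, derivable_pt_id]. }
      destruct (continuity_ab_min phi 0 (u0 - eps) Hpos (fun c _ => Hphic c)) as [vm [Hvm Hvm']].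
      assert (Hmpos : 0 < phi vm).
      { unfold phi. assert (vm < f (1 + (vm - 1) * a0)); [|lra].
        apply (below_pos (fun u => f (1 + (u - 1) * a0)) u0); auto.
        - apply Fcont; auto.
        - apply (HF0 t Ha).
        - apply (HU t Ha).
        - lra. }
      set (m := phi vm).
      exists (Rmin d2 (m / (L * q + 1))). split.
      { apply Rmin_pos; auto. apply Rdiv_lt_0_compat; auto. nra. }
      intros s Hs.
      assert (Hs2 : Rabs (s - t) < d2) by (eapply Rlt_le_trans; [exact Hs|apply Rmin_l]).
      assert (Hs3 : Rabs (s - t) < m / (L * q + 1)) by (eapply Rlt_le_trans; [exact Hs|apply Rmin_r]).
      assert (HAs := HA s Hs2).
      assert (HLq : L * q * Rabs (s - t) < m).
      { assert (Hp : 0 < L * q + 1) by nra.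
        apply (Rmult_lt_compat_l (L * q + 1)) in Hs3; auto.
        unfold Rdiv in Hs3. rewrite (Rmult_comm m), <- Rmult_assoc, Rinv_r, Rmult_1_l in Hs3 by lra.
        assert (0 <= Rabs (s - t)) by apply Rabs_pos. nra. }
      assert (Hpos2 : forall v, 0 <= v <= u0 - eps -> v < f (1 + (v - 1) * (c0 + q * s))).
      { intros w Hw. specialize (Hvm w Hw). unfold phi in Hvm. fold m in Hvm.
        assert (Hy1 : 0 <= 1 + (w - 1) * a0 <= 1) by (unfold a0 in *; nra).
        assert (Hy2 : 0 <= 1 + (w - 1) * (c0 + q * s) <= 1) by nra.
        assert (Hli := lipabs f L Hm HL Hl _ _ Hy1 Hy2).
        replace (1 + (w - 1) * (c0 + q * s) - (1 + (w - 1) * a0)) with ((w - 1) * q * (s - t)) in Hli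
          by (unfold a0; ring).
        rewrite !Rabs_mult in Hli.
        rewrite (Rabs_right q) in Hli by lra. rewrite (Rabs_left1 (w - 1)) in Hli by lra.
        assert (0 <= Rabs (s - t)) by apply Rabs_pos.
        assert (L * (- (w - 1) * q * Rabs (s - t)) <= L * q * Rabs (s - t)).
        { replace (L * q * Rabs (s - t)) with (L * (1 * q * Rabs (s - t))) by ring.
          apply Rmult_le_compat_l; auto. apply Rmult_le_compat_r; auto. apply Rmult_le_compat_r; lra. }
        assert (Hmm : m = f (1 + (vm - 1) * a0) - vm) by reflexivity. lra. }
      destruct (Rle_dec (U s) (u0 - eps)) as [Hle|]; [|lra].
      destruct (HU s HAs) as [[? ?] [Hfs _]].
      assert (U s < f (1 + (U s - 1) * (c0 + q * s))) by (apply Hpos2; lra). lra. }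
  destruct Hup as [d1 [Hd1 Hup]]. destruct Hlow as [d3 [Hd3 Hlow]].
  exists (Rmin d1 d3). split; [apply Rmin_pos; auto|].
  intros s Hs.
  assert (Rabs (s - t) < d1) by (eapply Rlt_le_trans; [exact Hs|apply Rmin_l]).
  assert (Rabs (s - t) < d3) by (eapply Rlt_le_trans; [exact Hs|apply Rmin_r]).
  specialize (Hup s H). specialize (Hlow s H0). apply Rabs_def1; lra.
Qed.

Lemma mk_cont : forall F x,
  (forall e, 0 < e -> exists d, 0 < d /\ forall y, Rabs (y - x) < d -> Rabs (F y - F x) < e) ->
  continuity_pt F x.
Proof.
  intros F x H e He. destruct (H e He) as [d [Hd Hy]]. exists d. split; auto.
  intros y [_ Hyd]. apply Hy. exact Hyd.
Qed.

Lemma lim_const : forall c D x0, limit1_in (fun _ => c) D c x0.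
Proof. intros. apply mk_lim. intros. exists 1. split; [lra|]. intros. rewrite Rminus_diag, Rabs_R0; auto. Qed.

Lemma X_deriv : forall (f fd : R -> R) (L c0 q t : R) (U : R -> R),
  (forall y, derivable_pt_lim f y (fd y)) ->
  (forall y z, 0 <= y <= z -> z <= 1 -> f y <= f z) ->
  (forall y, 0 <= y <= 1 -> 0 <= f y) ->
  f 1 = 1 -> 0 <= L ->
  (forall y z, 0 <= y <= z -> z <= 1 -> f z - f y <= L * (z - y)) ->
  (forall x a, 0 < x < 1 -> 0 < a < 1 -> 1 - x = a * (1 - f x) -> a * fd x < 1) ->
  0 <= c0 -> 0 < q -> 0 < c0 + q * t < 1 ->
  (forall s, 0 < c0 + q * s < 1 -> smallest_fix (fun u => f (1 + (u - 1) * (c0 + q * s))) (U s)) ->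
  U t < 1 ->
  exists l, derivable_pt_lim (fun s => 1 + (U s - 1) * (c0 + q * s)) t l /\ l < 0.
Proof.
  intros f fd L c0 q t U Hd Hm Hnn H1 HL Hl Htr Hc0 Hq Ha HU Hu1.
  assert (HUc := U_cont f fd L c0 q t U Hd Hm Hnn H1 HL Hl Htr Hc0 Hq Ha HU Hu1).
  assert (Hfc : continuity f) by (intro y; apply derivable_continuous_pt; exists (fd y); apply Hd).
  set (a0 := c0 + q * t). set (u0 := U t). set (x0 := 1 + (u0 - 1) * a0).
  set (X := fun s => 1 + (U s - 1) * (c0 + q * s)).
  assert (Ha0 : 0 < a0 < 1) by exact Ha.
  assert (Hu1' : u0 < 1) by exact Hu1.
  destruct (HU t Ha) as [[Hu0a Hu0b] [Hfix Hsm]]. fold a0 u0 in Hfix, Hu0a, Hu0b, Hsm.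
  assert (Hfx0 : f x0 = u0) by exact Hfix.
  assert (Hx0 : 0 < x0 < 1) by (unfold x0; split; nra).
  assert (Htr0 : a0 * fd x0 < 1) by (apply Htr; auto; rewrite Hfx0; unfold x0; ring).
  assert (HXt : X t = x0) by reflexivity.
  assert (HXc : continuity_pt X t).
  { unfold X. apply continuity_pt_plus; [apply continuity_pt_const; intros ? ?; reflexivity|].
    apply continuity_pt_mult.
    - apply continuity_pt_minus; [apply mk_cont; exact HUc|apply continuity_pt_const; intros ? ?; reflexivity].
    - apply derivable_continuous_pt. apply derivable_pt_plus; [apply derivable_pt_const|].
      apply derivable_pt_mult; [apply derivable_pt_const|apply derivable_pt_id]. }
  destruct (HUc ((1 - u0) / 2) ltac:(lra)) as [dU [HdU HU2]].
  destruct (A_in c0 q t Hq Ha) as [d2 [Hd2 HA]].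
  set (d0 := Rmin dU d2).
  assert (Hd0 : 0 < d0) by (apply Rmin_pos; auto).
  set (Dm := fun h => h <> 0 /\ Rabs h < d0).
  assert (Hfacts : forall h, Dm h ->
     f (X (t + h)) = U (t + h) /\ U (t + h) < 1 /\
     X (t + h) - x0 = a0 * (f (X (t + h)) - f x0) - q * h * (1 - f (X (t + h))) /\
     X (t + h) <> x0).
  { intros h [Hh0 Hh].
    assert (Hs : Rabs (t + h - t) < d0) by (replace (t + h - t) with h by ring; exact Hh).
    assert (Hs1 : Rabs (t + h - t) < dU) by (eapply Rlt_le_trans; [exact Hs|apply Rmin_l]).
    assert (Hs2 : Rabs (t + h - t) < d2) by (eapply Rlt_le_trans; [exact Hs|apply Rmin_r]).
    destruct (HU (t + h) (HA _ Hs2)) as [_ [Hf _]].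
    specialize (HU2 _ Hs1). apply Rabs_def2 in HU2. fold u0 in HU2.
    assert (HF : f (X (t + h)) = U (t + h)) by exact Hf.
    assert (HU3 : U (t + h) < 1) by lra.
    assert (Hid : X (t + h) - x0 = a0 * (f (X (t + h)) - f x0) - q * h * (1 - f (X (t + h)))).
    { rewrite HF, Hfx0. unfold X, x0, a0. ring. }
    split; [exact HF|]. split; [exact HU3|]. split; [exact Hid|].
    intro Heq. rewrite Heq, Rminus_diag, Hfx0 in Hid.
    assert (q * h * (1 - u0) = 0) by lra.
    apply Rmult_integral in H. destruct H as [H|H]; [apply Rmult_integral in H; destruct H|]; lra. }
  set (DQ := fun h => (f (X (t + h)) - f x0) / (X (t + h) - x0)).
  assert (L1 : limit1_in (fun h => f (X (t + h))) Dm u0 0).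
  { apply mk_lim. intros e He.
    destruct (cont_ed f x0 (Hfc x0) e He) as [d [Hd' Hfd]].
    destruct (cont_ed X t HXc d Hd') as [d' [Hd'' HXd]].
    exists d'. split; auto. intros h _ Hh. rewrite <- Hfx0. apply Hfd. rewrite <- HXt. apply HXd.
    replace (t + h - t) with (h - 0) by ring. exact Hh. }
  assert (L2 : limit1_in DQ Dm (fd x0) 0).
  { apply mk_lim. intros e He.
    destruct (Hd x0 e He) as [del Hdel].
    destruct (cont_ed X t HXc del (cond_pos del)) as [d' [Hd'' HXd]].
    exists d'. split; auto. intros h Hh Hh'.
    destruct (Hfacts h Hh) as [_ [_ [_ Hne]]].
    assert (Hk := Hdel (X (t + h) - x0) ltac:(lra)).
    replace (x0 + (X (t + h) - x0)) with (X (t + h)) in Hk by ring.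
    unfold DQ. apply Hk. rewrite <- HXt. apply HXd.
    replace (t + h - t) with (h - 0) by ring. exact Hh'. }
  assert (Hden : 1 - a0 * fd x0 <> 0) by lra.
  assert (L3 := limit_mul _ _ Dm _ _ 0
     (limit_mul _ _ Dm _ _ 0 (lim_const (- q) Dm 0) (limit_minus _ _ Dm _ _ 0 (lim_const 1 Dm 0) L1))
     (limit_inv _ Dm _ 0 (limit_minus _ _ Dm _ _ 0 (lim_const 1 Dm 0) (limit_mul _ _ Dm _ _ 0 (lim_const a0 Dm 0) L2)) Hden)).
  simpl in L3.
  exists (- q * (1 - u0) * / (1 - a0 * fd x0)). split.
  - intros e He. destruct (use_lim _ _ _ _ L3 e He) as [alp [Halp Hlim]].
    assert (Hdp : 0 < Rmin alp d0) by (apply Rmin_pos; auto).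
    exists (mkposreal _ Hdp). intros h Hh0 Hh. simpl in Hh.
    assert (HDm : Dm h) by (split; auto; eapply Rlt_le_trans; [exact Hh|apply Rmin_r]).
    specialize (Hlim h HDm ltac:(rewrite Rminus_0_r; eapply Rlt_le_trans; [exact Hh|apply Rmin_l])).
    destruct (Hfacts h HDm) as [HF [HU3 [Hid Hne]]].
    fold X. rewrite HXt.
    replace ((X (t + h) - x0) / h) with (- q * (1 - f (X (t + h))) * / (1 - a0 * DQ h)); [exact Hlim|].
    assert (Hk : (X (t + h) - x0) * (1 - a0 * DQ h) = - q * h * (1 - f (X (t + h)))).
    { assert (Htmp : (X (t + h) - x0) * (1 - a0 * DQ h) = (X (t + h) - x0) - a0 * (f (X (t + h)) - f x0))
        by (unfold DQ; field; intro; apply Hne; lra).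
      rewrite Htmp, Hid. ring. }
    assert (Hden2 : 1 - a0 * DQ h <> 0).
    { intro Hz. rewrite Hz, Rmult_0_r in Hk.
      assert (q * h * (1 - f (X (t + h))) = 0) by lra.
      rewrite HF in H.
      apply Rmult_integral in H. destruct H as [H|H]; [apply Rmult_integral in H; destruct H|]; lra. }
    apply (Rmult_eq_reg_r (h * (1 - a0 * DQ h))); [|apply Rmult_integral_contrapositive; split; auto].
    replace ((X (t + h) - x0) / h * (h * (1 - a0 * DQ h))) with ((X (t + h) - x0) * (1 - a0 * DQ h)) by (field; auto).
    rewrite Hk. field. auto.
  - assert (0 < / (1 - a0 * fd x0)) by (apply Rinv_0_lt_compat; lra).
    assert (0 < q * (1 - u0)) by nra. nra.
Qed.

Lemma pow_decr : forall x a b, 0 < x <= 1 -> (a <= b)%nat -> x ^ b <= x ^ a.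
Proof.
  intros x a b Hx Hab. replace b with (a + (b - a))%nat by lia. rewrite pow_add.
  assert (0 <= x ^ a) by (apply pow_le; lra).
  assert (x ^ (b - a) <= 1) by (apply pow_le1; lra).
  assert (0 <= x ^ (b - a)) by (apply pow_le; lra). nra.
Qed.

Lemma pg1 : forall D K, pg D K 1 = sum_f_R0 D K.
Proof. intros. unfold pg. apply sum_eq. intros. rewrite pow1. ring. Qed.

Lemma Ffun_eq : forall P K q T1 s, (forall k, (K < k)%nat -> P k = 0) ->
  Ffun P K q T1 s = fun u => pg (Qd P K) K (1 + (u - 1) * ((1 - q) * T1 + q * s)).
Proof.
  intros. apply functional_extensionality. intro u. unfold Ffun, Qq.
  rewrite genf_thin.
  - unfold pg. apply sum_eq. intros. f_equal. f_equal. ring.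
  - intros k Hk. unfold Qd. rewrite H by lia. unfold Rdiv. ring.
Qed.

Lemma Gfun_eq : forall P K q T1 s u, (forall k, (K < k)%nat -> P k = 0) ->
  Gfun P K q T1 s u = pg P K (1 + (u - 1) * ((1 - q) * T1 + q * s)).
Proof.
  intros. unfold Gfun, Pq. rewrite genf_thin; auto.
  unfold pg. apply sum_eq. intros. f_equal. f_equal. ring.
Qed.

Theorem lemma4 (P : nat -> R) (kmax : nat)
  (HPnn : forall k, 0 <= P k)
  (HPsupp : forall k, (kmax < k)%nat -> P k = 0)
  (HPsum : sum_f_R0 P kmax = 1)
  (Hmean : 0 < meank P kmax)
  (T1 q : R) (HT1 : 0 < T1 < 1) (Hq : 0 < q <= 1)
  (T2 : R) (HT2 : 0 < T2 < 1)
  (Hpsi : 0 <= psi P kmax q T1 T2 < 1) :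
  exists l : R, derivable_pt_lim (psi P kmax q T1) T2 l /\ l < 0.
Proof.
  set (K := kmax). set (m := meank P K).
  set (QD := Qd P K).
  assert (HQnn : forall k, 0 <= QD k).
  { intro k. unfold QD, Qd. apply div_nonneg; [|exact Hmean].
    apply Rmult_le_pos; [apply pos_INR|apply HPnn]. }
  assert (HQsum : sum_f_R0 QD K = 1).
  { assert (Hs : sum_f_R0 (fun i => INR (S i) * P (S i)) K = m).
    { unfold m, meank. fold K.
      assert (H1 := decomp_sum (fun k => INR k * P k) (S K) ltac:(lia)). simpl pred in H1.
      rewrite tech5 in H1. rewrite (HPsupp (S K)) in H1 by (unfold K; lia).
      change (INR 0) with 0 in H1. lra. }
    unfold QD, Qd. fold m.
    transitivity (/ m * sum_f_R0 (fun i => INR (S i) * P (S i)) K).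
    - rewrite scal_sum. apply sum_eq. intros. rewrite Nat.add_1_r. unfold Rdiv. ring.
    - rewrite Hs. field. unfold m, K. lra. }
  set (c0 := (1 - q) * T1).
  set (fQ := pg QD K). set (fd := pgd QD K).
  set (L := sum_f_R0 (fun k => QD k * INR k) K).
  assert (HL : 0 <= L) by (apply cond_pos_sum; intro; apply Rmult_le_pos; [apply HQnn|apply pos_INR]).
  assert (Hf1 : fQ 1 = 1) by (unfold fQ; rewrite pg1; exact HQsum).
  set (U := ustar P K q T1).
  assert (HU : forall s, 0 < c0 + q * s < 1 ->
     smallest_fix (fun u => fQ (1 + (u - 1) * (c0 + q * s))) (U s)).
  { intros s Hs. unfold U, ustar. rewrite Ffun_eq by exact HPsupp.
    apply epsilon_spec. apply sfix_exists.
    - apply Fcont. intro y. apply pg_cont.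
    - replace (1 + (1 - 1) * ((1 - q) * T1 + q * s)) with 1 by ring. exact Hf1.
    - apply pg_nonneg; auto. fold c0. lra. }
  assert (Hpsi_eq : psi P K q T1 = comp (pg P K) (fun s => 1 + (U s - 1) * (c0 + q * s))).
  { apply functional_extensionality. intro s. unfold psi, comp. rewrite Gfun_eq by exact HPsupp.
    reflexivity. }
  assert (Ha : 0 < c0 + q * T2 < 1) by (unfold c0; split; nra).
  assert (HUt : U T2 < 1).
  { destruct (HU T2 Ha) as [[H0 H1] _]. destruct H1 as [|Heq]; auto.
    exfalso. fold K in Hpsi. rewrite Hpsi_eq in Hpsi. unfold comp in Hpsi. rewrite Heq in Hpsi.
    replace (1 + (1 - 1) * (c0 + q * T2)) with 1 in Hpsi by ring.
    rewrite pg1 in Hpsi. unfold K in Hpsi. rewrite HPsum in Hpsi. lra. }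
  destruct (X_deriv fQ fd L c0 q T2 U) as [l [Hl Hlneg]]; auto.
  - intro y. apply pg_deriv.
  - intros y z Hyz _. apply pg_mono; auto.
  - intros y Hy. apply pg_nonneg; auto; lra.
  - intros y z Hyz Hz. apply pg_lip; auto.
  - intros x a Hx Ha' Hfix. apply transv; auto.
  - unfold c0. apply Rmult_le_pos; lra.
  - lra.
  - set (x0 := 1 + (U T2 - 1) * (c0 + q * T2)).
    assert (Hx0 : 0 < x0 <= 1).
    { destruct (HU T2 Ha) as [[H0 H1] _]. unfold x0. split; nra. }
    exists (pgd P K x0 * l). split.
    + fold K. rewrite Hpsi_eq. apply derivable_pt_lim_comp; auto. apply pg_deriv.
    + assert (Hgd : 0 < pgd P K x0).
      { apply Rlt_le_trans with (sum_f_R0 (fun k => INR k * P k) K * x0 ^ K).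
        - apply Rmult_lt_0_compat; [exact Hmean|]. apply pow_lt; lra.
        - unfold pgd. rewrite Rmult_comm, scal_sum. apply sum_Rle. intros k Hk.
          assert (x0 ^ K <= x0 ^ pred k) by (apply pow_decr; auto; lia).
          assert (0 <= INR k * P k) by (apply Rmult_le_pos; [apply pos_INR|apply HPnn]).
          nra. }
      nra.
Qed.
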